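(* Let $\mathcal{O}$ be a nonempty set of quantum channels on $n$ qubits that is closed under composition (if $\Phi,\Phi'\in\mathcal{O}$ then $\Phi\circ\Phi'\in\mathcal{O}$), let $\Psi$ be a quantum channel on $n$ qubits with $\gamma(\Psi)<\infty$, and let $k\ge 0$ be an integer. Then for every sample $S=(z_1,\ldots,z_m)$ with $z_i\in\mathbb{F}_2^n\times\mathbb{F}_2^n$, \[ \hat{R}_S(\mathcal{F}(\mathcal{O}^{(k)}_\Psi))\le \gamma^*\,\hat{R}_S(\mathcal{F}(\mathcal{O})),\qquad \gamma^*=\min\{1+2\gamma_{\max,n},\,(1+2\gamma(\Psi))^k\}, \] and for every probability distribution $D$ on $\mathbb{F}_2^n\times\mathbb{F}_2^n$, $R_D(\mathcal{F}(\mathcal{O}^{(k)}_\Psi))\le\gamma^* R_D(\mathcal{F}(\mathcal{O}))$. (If $\gamma_{\max,n}=\infty$, $\gamma^*$ is $(1+2\gamma(\Psi))^k$.)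
   Context: A quantum channel on $n$ qubits is a completely positive trace-preserving linear map on $2^n\times 2^n$ complex matrices. For a channel (or linear map) $\Phi$, $f_\Phi(x,y)=\mathrm{Tr}[\Phi(|x\rangle\langle x|)\,|y\rangle\langle y|]$ for $x,y\in\mathbb{F}_2^n$; for a set $\Omega$ of channels, $\mathcal{F}(\Omega)=\{f_\Phi:\Phi\in\Omega\}$. Empirical Rademacher complexity: $\hat{R}_S(\mathcal{G})=\mathbb{E}_{\epsilon}[\sup_{g\in\mathcal{G}}\frac1m\sum_{i=1}^m\epsilon_i g(z_i)]$ with $\epsilon_i$ i.i.d. uniform on $\{\pm1\}$; $R_D(\mathcal{G})=\mathbb{E}_{S\sim D^m}\hat{R}_S(\mathcal{G})$. $\mathrm{Conv}(\mathcal{O})$ is the convex hull. Free robustness w.r.t. $\mathcal{O}$: $\gamma(\Phi)=\inf\{\lambda\ge0:\exists\,\Phi'\in\mathrm{Conv}(\mathcal{O}),\ (\Phi+\lambda\Phi')/(1+\lambda)\in\mathrm{Conv}(\mathcal{O})\}$. $\gamma_{\max,n}=\sup\{\gamma(\Phi):\Phi\text{ a channel on }n\text{ qubits}\}$. $\mathcal{O}_\Psi=\mathcal{O}\cup\{\Psi\}$, and $\mathcal{O}^{(k)}_\Psi$ is the set of all finite compositions $\Phi_l\circ\cdots\circ\Phi_1$ ($l\ge1$) with each $\Phi_i\in\mathcal{O}_\Psi$ and at most $k$ of the $\Phi_i$ equal to $\Psi$. *)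

(* Defs.v *)
From mathcomp Require Import all_boot all_order all_algebra.
From mathcomp Require Import all_classical all_reals.
From mathcomp Require Import ereal complex.
Set Implicit Arguments. Unset Strict Implicit. Unset Printing Implicit Defensive.
Import Order.TTheory GRing.Theory Num.Theory.
Local Open Scope ring_scope.
Local Open Scope classical_set_scope.

Notation Bits n := 'I_(2 ^ n).

Section QChannels.
Variable R : realType.
Local Notation C := R[i].

(* n-qubit operators: 2^n x 2^n complex matrices.  The computational basis
   state |x>, x in F_2^n, is labelled by its binary value in 'I_(2^n). *)
Definition Mat (n : nat) := 'M[C]_(2 ^ n).
Definition LinMap (n : nat) := Mat n -> Mat n.

Definition adjv N (v : 'cV[C]_N) : 'rV[C]_N := map_mx Num.conj v^T.

(* a p x p block matrix with N x N blocks (an element of M_p (M_N)) is PSD *)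
Definition block_psd N p (X : 'I_p -> 'I_p -> 'M[C]_N) : Prop :=
  forall v : 'I_p -> 'cV[C]_N,
    0 <= \sum_(i < p) \sum_(j < p) (adjv (v i) *m X i j *m v j) 0 0.

Definition is_linear_map n (Phi : LinMap n) : Prop :=
  forall (a : C) (X Y : Mat n), Phi (a *: X + Y) = a *: Phi X + Phi Y.

(* complete positivity: id_p (x) Phi is positive for every p *)
Definition completely_positive n (Phi : LinMap n) : Prop :=
  forall (p : nat) (X : 'I_p -> 'I_p -> Mat n),
    block_psd X -> block_psd (fun i j => Phi (X i j)).

Definition trace_preserving n (Phi : LinMap n) : Prop :=
  forall X : Mat n, \tr (Phi X) = \tr X.

Definition is_channel n (Phi : LinMap n) : Prop :=
  [/\ is_linear_map Phi, completely_positive Phi & trace_preserving Phi].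

Definition ketbra n (x : Bits n) : Mat n := delta_mx x x.

(* f_Phi(x,y) = Tr[Phi(|x><x|) |y><y|]  (real part; it is real for channels) *)
Definition fPhi n (Phi : LinMap n) (z : Bits n * Bits n) : R :=
  complex.Re (\tr (Phi (ketbra z.1) *m ketbra z.2)).

Definition Fset n (Omega : set (LinMap n)) : set (Bits n * Bits n -> R) :=
  [set fPhi Phi | Phi in Omega].

Definition rsign (b : bool) : R := if b then 1 else -1.

Definition emp_rademacher (T : Type) (m : nat) (S : 'I_m -> T) (G : set (T -> R))
  : \bar R :=
  (\sum_(eps : {ffun 'I_m -> bool})
     ((2 ^ m)%:R^-1)%:E *
     ereal_sup [set ((m%:R)^-1 * \sum_(i < m) rsign (eps i) * g (S i))%:E
               | g in G])%E.

Definition is_distribution (T : finType) (D : T -> R) : Prop :=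
  (forall t, 0 <= D t) /\ \sum_t D t = 1.

Definition rademacher (T : finType) (D : T -> R) (m : nat) (G : set (T -> R))
  : \bar R :=
  (\sum_(S : {ffun 'I_m -> T}) (\prod_(i < m) D (S i))%:E * emp_rademacher S G)%E.

Definition conv n (O : set (LinMap n)) : set (LinMap n) :=
  [set Phi | exists (l : nat) (c : 'I_l -> R) (Ph : 'I_l -> LinMap n),
     [/\ forall i, 0 <= c i, \sum_i c i = 1, forall i, O (Ph i) &
         Phi = fun X => \sum_i ((c i)%:C)%C *: Ph i X]].

Definition robustness n (O : set (LinMap n)) (Phi : LinMap n) : \bar R :=
  ereal_inf [set lam%:E | lam in
    [set lam : R | 0 <= lam /\ exists2 Phi', conv O Phi' &
       conv O (fun X => ((1 + lam)^-1)%:C%C *: (Phi X + (lam%:C)%C *: Phi' X))]].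

Definition gamma_max n (O : set (LinMap n)) : \bar R :=
  ereal_sup [set robustness O Phi | Phi in [set Phi | is_channel Phi]].

(* composition Phi_l o ... o Phi_1 of the list [:: Phi_l; ...; Phi_1] *)
Definition compose_list n (s : seq (LinMap n)) : LinMap n :=
  foldr (fun f g => f \o g) id s.

Definition Ok n (O : set (LinMap n)) (Psi : LinMap n) (k : nat)
  : set (LinMap n) :=
  [set Phi | exists s : seq (LinMap n),
     [/\ (0 < size s)%N,
         all (fun f => `[< O f \/ f = Psi >]) s,
         (count (fun f => `[< f = Psi >]) s <= k)%N &
         Phi = compose_list s]].

Definition gamma_star n (O : set (LinMap n)) (Psi : LinMap n) (k : nat)
  : \bar R :=
  Order.min (1 + 2 * gamma_max O)%E (((1 + 2 * fine (robustness O Psi)) ^+ k)%:E).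

End QChannels.

(* Main.v *)
Require Import Defs.
From mathcomp Require Import all_boot all_order all_algebra.
From mathcomp Require Import all_classical all_reals.
From mathcomp Require Import ereal complex.
From mathcomp Require Import lra ring.
Import Order.TTheory GRing.Theory Num.Theory.
Local Open Scope ring_scope.
Local Open Scope classical_set_scope.

Section Helpers.
Variable R : realType.
Variable n : nat.
Local Notation C := R[i].
Local Notation LM := (LinMap R n).

Lemma lin0 (Phi : LM) : is_linear_map Phi -> Phi 0 = 0.
Proof.
move=> HL; have := HL 1 0 0; rewrite !scale1r addr0 => H.
by have := congr1 (fun M => M - Phi 0) H; rewrite subrr addrK => <-.
Qed.

Lemma linZ (Phi : LM) a X : is_linear_map Phi -> Phi (a *: X) = a *: Phi X.
Proof. by move=> HL; have := HL a X 0; rewrite !addr0 lin0 // addr0. Qed.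

Lemma linD (Phi : LM) X Y : is_linear_map Phi -> Phi (X + Y) = Phi X + Phi Y.
Proof. by move=> HL; have := HL 1 X Y; rewrite !scale1r. Qed.

Lemma lin_sum (Phi : LM) (I : Type) (s : seq I) (F : I -> Mat R n) :
  is_linear_map Phi -> Phi (\sum_(i <- s) F i) = \sum_(i <- s) Phi (F i).
Proof.
move=> HL; elim: s => [|a s IH]; first by rewrite !big_nil lin0.
by rewrite !big_cons linD // IH.
Qed.

Lemma channel_comp (Phi Psi : LM) :
  is_channel Phi -> is_channel Psi -> is_channel (Phi \o Psi).
Proof.
case=> L1 C1 T1 [L2 C2 T2]; split.
- by move=> a X Y /=; rewrite L2 L1.
- by move=> p X HX; apply: (C1 p (fun i j => Psi (X i j))); apply: C2.
- by move=> X /=; rewrite T1 T2.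
Qed.

Lemma channel_id : is_channel (@id (Mat R n)).
Proof. by split. Qed.

Lemma channel_compose_list (s : seq LM) :
  all (fun f => `[< is_channel f >]) s -> is_channel (compose_list s).
Proof.
elim: s => [|f s IH] /=; first by move=> _; exact: channel_id.
by case/andP=> /asboolP Hf Hs; apply: channel_comp => //; apply: IH.
Qed.


Definition ev (s : seq (R * LM)) : LM := fun X => \sum_(p <- s) ((p.1)%:C)%C *: p.2 X.
Definition allO (O : set LM) (s : seq (R * LM)) := all (fun p => `[< O p.2 >]) s.
Definition sumc (s : seq (R * LM)) := \sum_(p <- s) p.1.
Definition sumabs (s : seq (R * LM)) := \sum_(p <- s) `|p.1|.

Fixpoint comb (s t : seq (R * LM)) : seq (R * LM) :=
  match s with
  | [::] => [::]
  | p :: s' => map (fun q => (p.1 * q.1, p.2 \o q.2)) t ++ comb s' t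
  end.

Lemma ev_comb s t X : all (fun p => `[< is_linear_map p.2 >]) s ->
  ev (comb s t) X = ev s (ev t X).
Proof.
rewrite /ev; elim: s => [|p s IH] /=; first by rewrite !big_nil.
case/andP => /asboolP Hp Hs; rewrite big_cat IH // big_cons big_map /=.
congr (_ + _); rewrite lin_sum // scaler_sumr; apply: eq_bigr => q _.
by rewrite linZ // scalerA rmorphM.
Qed.

Lemma sumc_comb s t : sumc (comb s t) = sumc s * sumc t.
Proof.
rewrite /sumc; elim: s => [|p s IH] /=; first by rewrite !big_nil mul0r.
by rewrite big_cat IH big_cons big_map mulrDl !mulr_sumr.
Qed.

Lemma sumabs_comb s t : sumabs (comb s t) = sumabs s * sumabs t.
Proof.
rewrite /sumabs; elim: s => [|p s IH] /=; first by rewrite !big_nil mul0r.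
rewrite big_cat IH big_cons big_map mulrDl !mulr_sumr; congr (_ + _).
by apply: eq_bigr => q _; rewrite normrM.
Qed.

Lemma allO_comb (O : set LM) s t :
  (forall Phi Phi', O Phi -> O Phi' -> O (Phi \o Phi')) ->
  allO O s -> allO O t -> allO O (comb s t).
Proof.
move=> HO; rewrite /allO; elim: s => [|p s IH] //= /andP[/asboolP Hp Hs] Ht.
rewrite all_cat IH // andbT all_map; apply/allP => q qt /=.
by apply/asboolP; apply: HO => //; move/allP: Ht => /(_ q qt) /asboolP.
Qed.

Lemma ReM_real (c : R) (w : C) : complex.Re ((c%:C)%C * w) = c * complex.Re w.
Proof. by case: w => a b /=; rewrite mul0r oppr0 addr0. Qed.

Lemma fPhi_ev s z : fPhi (ev s) z = \sum_(p <- s) p.1 * fPhi p.2 z.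
Proof.
rewrite /fPhi /ev mulmx_suml [\tr _]raddf_sum raddf_sum; apply: eq_bigr => p _.
rewrite -scalemxAl; change (complex.Re (\tr (((p.1)%:C)%C *: (p.2 (ketbra R z.1) *m ketbra R z.2))) = p.1 * complex.Re (\tr (p.2 (ketbra R z.1) *m ketbra R z.2))).
by rewrite mxtraceZ ReM_real.
Qed.


Definition scl (a : R) (s : seq (R * LM)) := map (fun p => (a * p.1, p.2)) s.

Lemma ev_scl a s X : ev (scl a s) X = (a%:C)%C *: ev s X.
Proof.
rewrite /ev big_map scaler_sumr; apply: eq_bigr => p _.
by rewrite /= rmorphM scalerA.
Qed.

Lemma ev_cat s t X : ev (s ++ t) X = ev s X + ev t X.
Proof. by rewrite /ev big_cat. Qed.

Lemma sumc_scl a s : sumc (scl a s) = a * sumc s.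
Proof. by rewrite /sumc big_map mulr_sumr. Qed.

Lemma sumabs_scl a s : sumabs (scl a s) = `|a| * sumabs s.
Proof. by rewrite /sumabs big_map mulr_sumr; apply: eq_bigr => p _; rewrite normrM. Qed.

Lemma sumc_cat s t : sumc (s ++ t) = sumc s + sumc t.
Proof. by rewrite /sumc big_cat. Qed.

Lemma sumabs_cat s t : sumabs (s ++ t) = sumabs s + sumabs t.
Proof. by rewrite /sumabs big_cat. Qed.

Lemma allO_scl O a s : allO O (scl a s) = allO O s.
Proof. by rewrite /allO all_map. Qed.

Lemma allO_cat O s t : allO O (s ++ t) = allO O s && allO O t.
Proof. by rewrite /allO all_cat. Qed.

Lemma conv_seq (O : set LM) F : conv O F ->
  exists s, [/\ allO O s, forall X, F X = ev s X, sumc s = 1 & sumabs s = 1].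
Proof.
case=> l [c [Ph [c0 c1 OPh ->]]].
exists [seq (c i, Ph i) | i <- index_enum 'I_l]; split.
- by rewrite /allO all_map; apply/allP => i _ /=; apply/asboolP.
- by move=> X; rewrite /ev big_map.
- by rewrite /sumc big_map.
- by rewrite /sumabs big_map -c1; apply: eq_bigr => i _ /=; rewrite ger0_norm.
Qed.

Lemma decomp_rob (O : set LM) (Phi Phi' : LM) (lam : R) :
  0 <= lam -> conv O Phi' ->
  conv O (fun X => ((1 + lam)^-1)%:C%C *: (Phi X + (lam%:C)%C *: Phi' X)) ->
  exists s, [/\ allO O s, forall X, Phi X = ev s X, sumc s = 1 &
                sumabs s = 1 + 2 * lam].
Proof.
move=> lam0 /conv_seq [t [Ot Et ct at']] /conv_seq [u [Ou Eu cu au]].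
exists (scl (1 + lam) u ++ scl (- lam) t); split.
- by rewrite allO_cat !allO_scl Ou Ot.
- move=> X; rewrite ev_cat !ev_scl -Eu -Et scalerA -rmorphM mulfV; last first.
    by rewrite gt_eqF // ltr_wpDr.
  by rewrite scale1r rmorphN scaleNr addrK.
- by rewrite sumc_cat !sumc_scl cu ct; lra.
- rewrite sumabs_cat !sumabs_scl au at' normrN !ger0_norm //; first lra.
  lra.
Qed.

Lemma allO_lin (O : set LM) s : (forall Phi, O Phi -> is_channel Phi) ->
  allO O s -> all (fun p => `[< is_linear_map p.2 >]) s.
Proof.
move=> HO /allP H; apply/allP => p /H /asboolP /HO [L _ _]; exact/asboolP.
Qed.

Lemma Ok_decomp (O : set LM) (Psi : LM) (sp : seq (R * LM)) (b0 : R) :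
  (forall Phi, O Phi -> is_channel Phi) ->
  (forall Phi Phi', O Phi -> O Phi' -> O (Phi \o Phi')) ->
  allO O sp -> (forall X, Psi X = ev sp X) -> sumc sp = 1 -> sumabs sp <= b0 ->
  1 <= b0 ->
  forall s : seq LM, (0 < size s)%N -> all (fun f => `[< O f \/ f = Psi >]) s ->
  exists t, [/\ allO O t, forall X, compose_list s X = ev t X, sumc t = 1 &
     sumabs t <= b0 ^+ (count (fun f => `[< f = Psi >]) s)].
Proof.
move=> HOc HOcomp Osp Esp csp asp b01.
have head : forall f, O f \/ f = Psi -> exists t0, [/\ allO O t0,
    forall X, f X = ev t0 X, sumc t0 = 1 &
    sumabs t0 <= b0 ^+ `[< f = Psi >]].
  move=> f Hf; case: (pselect (O f)) => Of.
  - exists [:: (1, f)]; split.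
    + by rewrite /allO /= andbT; apply/asboolP.
    + by move=> X; rewrite /ev big_cons big_nil /= rmorph1 scale1r addr0.
    + by rewrite /sumc big_cons big_nil addr0.
    + rewrite /sumabs big_cons big_nil addr0 normr1.
      by case: (`[< f = Psi >]) => //=; rewrite expr1.
  - have fP : f = Psi by case: Hf.
    exists sp; split => //; first by move=> X; rewrite fP Esp.
    by have -> : `[< f = Psi >] = true by apply/asboolP.
elim=> [|f s IH] //= _ /andP[/asboolP Hf Hs].
have [t0 [O0 E0 c0 a0]] := head f Hf.
case: s IH Hs => [|g s] IH Hs.
  { exists t0; split => //=.
    all: try (by move=> X; rewrite E0).
    all: by rewrite addn0. }
have [t' [O' E' c' a']] := IH isT Hs.
exists (comb t0 t'); split.
- exact: allO_comb.
- move=> X; rewrite ev_comb; last by apply: allO_lin HOc O0.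
  by rewrite -E' -E0.
- by rewrite sumc_comb c0 c' mulr1.
- rewrite sumabs_comb exprD; apply: ler_pM => //.
  + by rewrite /sumabs sumr_ge0.
  + by rewrite /sumabs sumr_ge0.
Qed.

Lemma quad_formE N (w : 'cV[C]_N) (M : 'M[C]_N) :
  (adjv w *m M *m w) 0 0 = \sum_j \sum_i (w i 0)^* * M i j * w j 0.
Proof.
rewrite mxE; apply: eq_bigr => j _; rewrite mxE mulr_suml; apply: eq_bigr => i _.
by rewrite !mxE.
Qed.

Lemma ketbra_psd (x : Bits n) : block_psd (fun (_ _ : 'I_1) => ketbra R x).
Proof.
move=> v; rewrite !big_ord1 quad_formE (bigD1 x) //= [X in _ + X]big1 ?addr0; last first.
  move=> j /negbTE jx; rewrite big1 // => i _; rewrite !mxE jx andbF mulr0.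
  by rewrite mul0r.
rewrite (bigD1 x) //= [X in _ + X]big1 ?addr0; last first.
  by move=> i /negbTE ix; rewrite !mxE ix mulr0 mul0r.
by rewrite !mxE !eqxx mulr1 mulrC mul_conjC_ge0.
Qed.

Lemma trace_ketbra (M : Mat R n) (y : Bits n) : \tr (M *m ketbra R y) = M y y.
Proof.
rewrite /mxtrace (bigD1 y) //= [X in _ + X]big1 ?addr0.
  rewrite mxE (bigD1 y) //= [X in _ + X]big1 ?addr0; first by rewrite !mxE !eqxx mulr1.
  by move=> k /negbTE ky; rewrite !mxE ky mulr0.
move=> i /negbTE iy; rewrite mxE big1 // => k _; rewrite !mxE.
by case: (k == y); rewrite ?iy /= mulr0.
Qed.

Lemma diag_ge0 (Phi : LM) (x y : Bits n) : is_channel Phi ->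
  0 <= Phi (ketbra R x) y y.
Proof.
case=> _ CP _; have := CP 1%N (fun _ _ => ketbra R x) (ketbra_psd x).
move=> /(_ (fun _ => delta_mx y 0)); rewrite !big_ord1 quad_formE.
rewrite (bigD1 y) //= [X in _ + X]big1 ?addr0; last first.
  move=> j /negbTE jy; rewrite big1 // => i _; rewrite !mxE jy /= mulr0.
  done.
rewrite (bigD1 y) //= [X in _ + X]big1 ?addr0; last first.
  by move=> i /negbTE iy; rewrite !mxE iy /= conjC0 !mul0r.
by rewrite !mxE !eqxx /= conjC1 mulr1 mul1r.
Qed.

Lemma fPhi_bound (Phi : LM) z : is_channel Phi -> 0 <= fPhi Phi z <= 1.
Proof.
move=> Hc; rewrite /fPhi trace_ketbra.
have Re0 : forall y, 0 <= complex.Re (Phi (ketbra R z.1) y y).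
  by move=> y; have := @diag_ge0 Phi z.1 y Hc; rewrite lecE => /andP[_].
apply/andP; split; first exact: Re0.
have tr1 : \sum_y complex.Re (Phi (ketbra R z.1) y y) = 1.
  case: Hc => _ _ TP; rewrite -raddf_sum.
  change (complex.Re (\tr (Phi (ketbra R z.1))) = 1).
  rewrite TP /mxtrace (bigD1 z.1) //= [X in _ + X]big1 ?addr0; first by rewrite mxE !eqxx.
  by move=> i /negbTE iz; rewrite mxE iz.
rewrite -tr1 (bigD1 z.2) //= lerDl; apply: sumr_ge0 => i _; exact: Re0.
Qed.

Section Rad.
Variables (O : set LM) (m : nat) (S : 'I_m -> Bits n * Bits n).
Hypothesis HOne : O !=set0.
Hypothesis HOch : forall Phi, O Phi -> is_channel Phi.

Definition Xg (eps : {ffun 'I_m -> bool}) (g : Bits n * Bits n -> R) :=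
  (m%:R)^-1 * \sum_(i < m) rsign R (eps i) * g (S i).
Definition flip (eps : {ffun 'I_m -> bool}) : {ffun 'I_m -> bool} :=
  [ffun i => ~~ eps i].
Definition A eps := fine (ereal_sup [set (Xg eps g)%:E | g in Fset O]).

Lemma flip_inj : injective flip.
Proof.
move=> e1 e2 H; apply/ffunP => i; have := congr1 (fun e : {ffun _ -> bool} => e i) H.
by rewrite !ffunE => /negb_inj.
Qed.

Lemma flipK : involutive flip.
Proof. by move=> e; apply/ffunP => i; rewrite !ffunE negbK. Qed.

Lemma Xg_bound eps Phi : is_channel Phi -> `|Xg eps (fPhi Phi)| <= 1.
Proof.
move=> Hc; rewrite /Xg normrM.
case: (posnP m) => [m0|mpos].
  by rewrite [in `|(m%:R)^-1|]m0 invr0 normr0 mul0r.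
have hm : 0 < (m%:R : R) by rewrite ltr0n.
rewrite ger0_norm ?invr_ge0 ?ler0n //.
apply: (@le_trans _ _ ((m%:R)^-1 * m%:R)); last by rewrite mulVf // gt_eqF.
apply: ler_wpM2l; first by rewrite invr_ge0 ler0n.
apply: le_trans (ler_norm_sum _ _ _) _.
have -> : (m%:R : R) = \sum_(i < m) 1 by rewrite sumr_const card_ord.
apply: ler_sum => i _; rewrite normrM.
have /andP[g0 g1] := @fPhi_bound Phi (S i) Hc.
by rewrite (ger0_norm g0) /rsign; case: (eps i); rewrite ?normrN normr1 mul1r.
Qed.

Lemma Asup_fin eps :
  ereal_sup [set (Xg eps g)%:E | g in Fset O] = (A eps)%:E.
Proof.
rewrite /A fineK //; have [Phi0 O0] := HOne.
apply: fin_real; apply/andP; split.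
- apply: (@lt_le_trans _ _ (Xg eps (fPhi Phi0))%:E); first exact: ltNyr.
  by apply: ereal_sup_ubound; exists (fPhi Phi0) => //; exists Phi0.
- apply: (@le_lt_trans _ _ 1%:E); last exact: ltry.
  apply: ge_ereal_sup => y [g [Phi OPhi <-] <-]; rewrite lee_fin.
  by have := Xg_bound eps Phi (HOch _ OPhi); rewrite ler_norml => /andP[_ ->].
Qed.

Lemma Xg_le_A eps g : Fset O g -> Xg eps g <= A eps.
Proof.
move=> Hg; rewrite -lee_fin -Asup_fin; apply: ereal_sup_ubound; by exists g.
Qed.

Lemma Xg_flip eps g : Xg (flip eps) g = - Xg eps g.
Proof.
rewrite /Xg -mulrN -sumrN; congr (_ * _); apply: eq_bigr => i _.
by rewrite ffunE /rsign; case: (eps i) => /=; rewrite ?mulN1r ?mulNr ?mul1r ?opprK.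
Qed.

Lemma AB_ge0 eps : 0 <= A eps + A (flip eps).
Proof.
have [Phi0 O0] := HOne.
have F0 : Fset O (fPhi Phi0) by exists Phi0.
have h1 := Xg_le_A eps (fPhi Phi0) F0.
have h2 := Xg_le_A (flip eps) (fPhi Phi0) F0.
rewrite Xg_flip in h2; lra.
Qed.


Lemma Xg_ev eps t :
  Xg eps (fPhi (ev t)) = \sum_(p <- t) p.1 * Xg eps (fPhi p.2).
Proof.
rewrite /Xg; under eq_bigr do rewrite fPhi_ev mulr_sumr.
rewrite exchange_big /= mulr_sumr; apply: eq_bigr => p _.
rewrite mulr_sumr mulr_sumr mulr_sumr; apply: eq_bigr => i _.
by ring.
Qed.

Lemma term_bound (c X a b : R) : X <= a -> - X <= b ->
  c * X <= (`|c| + c) / 2 * a + (`|c| - c) / 2 * b.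
Proof.
move=> Xa Xb; case: (lerP 0 c) => c0.
- rewrite ger0_norm // subrr mul0r mul0r addr0.
  have -> : (c + c) / 2 = c by field.
  exact: ler_wpM2l.
- rewrite ltr0_norm // addNr mul0r mul0r add0r.
  have -> : (- c - c) / 2 = - c by field.
  by rewrite -mulrNN; apply: ler_wpM2l => //; rewrite oppr_ge0 ltW.
Qed.

Lemma decomp_bound eps t b : allO O t -> sumc t = 1 -> sumabs t <= b ->
  Xg eps (fPhi (ev t)) <=
    (b + 1) / 2 * A eps + (b - 1) / 2 * A (flip eps).
Proof.
move=> Ot ct at'; rewrite Xg_ev.
have AB := AB_ge0 eps.
set a := A eps; set bb := A (flip eps).
have H : \sum_(p <- t) p.1 * Xg eps (fPhi p.2) <=
   (sumabs t + sumc t) / 2 * a + (sumabs t - sumc t) / 2 * bb.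
  move: Ot; rewrite /sumabs /sumc; elim: t {ct at'} => [|p t IH] /=.
    by rewrite !big_nil addr0 subrr !mul0r addr0.
  case/andP => /asboolP Op Ot; rewrite !big_cons.
  have Fp : Fset O (fPhi p.2) by exists p.2.
  have h1 := Xg_le_A eps _ Fp.
  have h2 := Xg_le_A (flip eps) _ Fp; rewrite Xg_flip in h2.
  have I2 := term_bound p.1 _ _ _ h1 h2; have I1 := IH Ot.
  apply: le_trans (lerD I2 I1) _; rewrite le_eqVlt; apply/orP; left; apply/eqP.
  rewrite /a /bb; ring.
apply: le_trans H _; rewrite ct.
have : 0 <= (b - sumabs t) / 2 * (a + bb).
  by apply: mulr_ge0 => //; apply: divr_ge0; lra.
set sa := sumabs t; move=> h; nra.
Qed.


Definition Eavg := ((2 ^ m)%:R)^-1 * \sum_(eps : {ffun 'I_m -> bool}) A eps.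

Lemma sumA_flip : \sum_(eps : {ffun 'I_m -> bool}) A (flip eps) =
  \sum_(eps : {ffun 'I_m -> bool}) A eps.
Proof. by rewrite [RHS](reindex_inj flip_inj). Qed.

Lemma Eavg_ge0 : 0 <= Eavg.
Proof.
rewrite /Eavg; apply: mulr_ge0; first by rewrite invr_ge0 ler0n.
have : 0 <= \sum_(eps : {ffun 'I_m -> bool}) (A eps + A (flip eps)).
  by apply: sumr_ge0 => eps _; exact: AB_ge0.
by rewrite big_split /= sumA_flip; lra.
Qed.

Lemma emp_O : emp_rademacher S (Fset O) = Eavg%:E.
Proof.
rewrite /emp_rademacher /Eavg mulr_sumr -sumEFin; apply: eq_bigr => eps _.
by rewrite Asup_fin.
Qed.

Lemma emp_Q (Q : set LM) (b : R) :
  (forall Phi, Q Phi -> exists t, [/\ allO O t, forall X, Phi X = ev t X,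
      sumc t = 1 & sumabs t <= b]) ->
  (emp_rademacher S (Fset Q) <= (b * Eavg)%:E)%E.
Proof.
move=> HQ; rewrite /emp_rademacher.
apply: (@le_trans _ _ (\sum_(eps : {ffun 'I_m -> bool})
   (((2 ^ m)%:R)^-1 * ((b + 1) / 2 * A eps + (b - 1) / 2 * A (flip eps)))%:E)).
  apply: lee_sum => eps _; rewrite EFinM; apply: lee_wpmul2l.
    by rewrite lee_fin invr_ge0 ler0n.
  apply: ge_ereal_sup => y [g [Phi QPhi <-] <-]; rewrite lee_fin.
  have [t [Ot Et ct at']] := HQ Phi QPhi.
  have -> : Phi = ev t by apply: funext.
  exact: decomp_bound.
rewrite sumEFin lee_fin -mulr_sumr big_split /= -!mulr_sumr sumA_flip /Eavg.
by rewrite le_eqVlt; apply/orP; left; apply/eqP; field; rewrite pnatr_eq0 -lt0n expn_gt0.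
Qed.

End Rad.
End Helpers.

Section Final.
Variable R : realType.

Lemma pow_bound (c d : R) k : 1 <= c -> 0 <= d ->
  (c + d) ^+ k <= c ^+ k + d * k%:R * (c + d) ^+ k.
Proof.
move=> c1 d0; elim: k => [|k IH]; first by rewrite !expr0 mulr0 mul0r addr0.
have P1 : 1 <= (c + d) ^+ k by apply: exprn_ege1; lra.
have Q0 : 0 <= c ^+ k by apply: exprn_ge0; lra.
set P := (c + d) ^+ k in IH P1 *; set Q := c ^+ k in IH Q0 *.
rewrite !exprS -/P -/Q -natr1.
have h1 : c * P <= c * (Q + d * k%:R * P) by apply: ler_wpM2l => //; lra.
have h2 : 0 <= d * k%:R * P by apply: mulr_ge0; [apply: mulr_ge0 => // | lra].
have h3 : 0 <= d * P by apply: mulr_ge0 => //; lra.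
have h4 : 0 <= d * (d * k%:R * P) by apply: mulr_ge0.
have h5 : 0 <= d * (d * P) by apply: mulr_ge0.
nra.
Qed.

Lemma approx_le (x y K : R) : 0 <= K ->
  (forall d, 0 < d -> d <= 1 -> x <= y + d * K) -> x <= y.
Proof.
move=> K0 H; apply/ler_addgt0Pr => e e0.
have K1 : 0 < K + 1 by lra.
set d := Num.min 1 (e / (K + 1)).
have d0 : 0 < d by rewrite lt_min ltr01 divr_gt0.
have d1 : d <= 1 by rewrite ge_min lexx.
have de : d <= e / (K + 1) by rewrite ge_min lexx orbT.
apply: le_trans (H d d0 d1) _; rewrite lerD2l.
apply: (@le_trans _ _ (e / (K + 1) * K)); first exact: ler_wpM2r.
rewrite mulrAC ler_pdivrMr // ler_wpM2l //; [lra | lra].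
Qed.

Lemma approx_leE (x : \bar R) (y K : R) : 0 <= K ->
  (forall d, 0 < d -> d <= 1 -> (x <= (y + d * K)%:E)%E) -> (x <= y%:E)%E.
Proof.
move=> K0 H; case: x H => [r| |] H.
- rewrite lee_fin; apply: approx_le K0 _ => d d0 d1; by rewrite -lee_fin H.
- by have := H 1 ltr01 (lexx _).
- exact: leNye.
Qed.

End Final.

Lemma rob_fin (R : realType) (n : nat) (O : set (LinMap R n)) (Psi : LinMap R n) :
  (robustness O Psi < +oo)%E ->
  robustness O Psi = (fine (robustness O Psi))%:E /\ 0 <= fine (robustness O Psi).
Proof.
move=> Hlt.
have r0 : (0 <= robustness O Psi)%E.
  by apply/ereal_infP => y [lam [lam0 _] <-]; rewrite lee_fin.
have fin : robustness O Psi \is a fin_num.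
  by apply: fin_real; apply/andP; split => //; apply: lt_le_trans r0; exact: ltNyr.
split; first by rewrite fineK.
by rewrite -lee_fin fineK.
Qed.

Lemma rob_decomp (R : realType) (n : nat) (O : set (LinMap R n)) (Phi : LinMap R n)
  (x : R) : (robustness O Phi < x%:E)%E ->
  exists s, [/\ allO R n O s, forall X, Phi X = ev R n s X, sumc R n s = 1 &
                sumabs R n s <= 1 + 2 * x].
Proof.
move=> /ereal_inf_lt [y [lam [lam0 [Phi' cP' cP]] <-]]; rewrite lte_fin => lx.
have [s [Os Es cs as']] := @decomp_rob R n O Phi Phi' lam lam0 cP' cP.
by exists s; split => //; rewrite as'; lra.
Qed.

Arguments rob_fin {R n O Psi} : rename.
Arguments rob_decomp {R n O Phi x} : rename.
Arguments channel_compose_list {R n s} : rename.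
Arguments Eavg_ge0 {R n O m} S : rename.
Arguments emp_O {R n O m} S : rename.
Arguments emp_Q {R n O m S} : rename.
Arguments approx_leE {R x y K} : rename.
Arguments Ok_decomp {R n O Psi sp b0} : rename.
Arguments pow_bound {R c d} k : rename.

Theorem theorem2 (R : realType) (n : nat) (O : set (LinMap R n))
  (Psi : LinMap R n) (k : nat) :
  O !=set0 ->
  (forall Phi, O Phi -> is_channel Phi) ->
  (forall Phi Phi', O Phi -> O Phi' -> O (Phi \o Phi')) ->
  is_channel Psi ->
  (robustness O Psi < +oo)%E ->
  (forall (m : nat) (S : 'I_m -> Bits n * Bits n),
     (emp_rademacher S (Fset (Ok O Psi k))
        <= gamma_star O Psi k * emp_rademacher S (Fset O))%E) /\
  (forall (D : Bits n * Bits n -> R) (m : nat),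
     is_distribution D ->
     (rademacher D m (Fset (Ok O Psi k))
        <= gamma_star O Psi k * rademacher D m (Fset O))%E).
Proof.
move=> HOne HOch HOcomp HPsi Hrob.
have [req g0] := rob_fin Hrob.
set gam := fine (robustness O Psi) in req g0.
set c := 1 + 2 * gam.
have c1 : 1 <= c by rewrite /c; lra.
have Okch : forall Phi, Ok O Psi k Phi -> is_channel Phi.
  move=> Phi [s [_ Hs _ ->]]; apply: channel_compose_list.
  apply/allP => f fs; apply/asboolP; move/allP: Hs => /(_ f fs) /asboolP.
  by case=> [/HOch|->].
have routeB : forall m S, (emp_rademacher S (Fset (Ok O Psi k)) <=
     (c ^+ k * Eavg R n O m S)%:E)%E.
  move=> m S; have E0 := Eavg_ge0 S HOne HOch.
  apply: (@approx_leE _ _ _ (2 * k%:R * (c + 2) ^+ k * Eavg R n O m S)).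
    apply: mulr_ge0 => //; apply: mulr_ge0; last by apply: exprn_ge0; lra.
    by apply: mulr_ge0.
  move=> d d0 d1.
  have [sp [Osp Esp csp asp]] : exists s, [/\ allO R n O s,
      forall X, Psi X = ev R n s X, sumc R n s = 1 & sumabs R n s <= c + 2 * d].
    have := @rob_decomp R n O Psi (gam + d); rewrite req lte_fin => H.
    have [|s [? ? ? as']] := H; first lra.
    by exists s; split => //; rewrite /c; lra.
  have b01 : 1 <= c + 2 * d by lra.
  apply: (@le_trans _ _ (((c + 2 * d) ^+ k) * Eavg R n O m S)%:E).
    apply: emp_Q => // Phi [s [s0 Hs cnt ->]].
    have [t [Ot Et ct at']] := Ok_decomp HOch HOcomp Osp Esp csp asp b01 s s0 Hs.
    exists t; split => //; apply: le_trans at' _; exact: ler_weXn2l.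
  rewrite lee_fin.
  apply: (@le_trans _ _ ((c ^+ k + d * (2 * k%:R * (c + 2) ^+ k)) * Eavg R n O m S)); last first.
    by rewrite le_eqVlt; apply/orP; left; apply/eqP; ring.
  apply: ler_wpM2r => //.
  have d2 : 0 <= 2 * d by lra.
  apply: le_trans (pow_bound k c1 d2) _; rewrite lerD2l.
  have -> : 2 * d * k%:R * (c + 2 * d) ^+ k = d * (2 * k%:R * (c + 2 * d) ^+ k) by ring.
  apply: ler_wpM2l; first lra.
  apply: ler_wpM2l; first by apply: mulr_ge0.
  apply: lerXn2r; rewrite ?nnegrE; lra.
have routeA : forall g, gamma_max O = g%:E -> forall m S,
    (emp_rademacher S (Fset (Ok O Psi k)) <= ((1 + 2 * g) * Eavg R n O m S)%:E)%E.
  move=> g gE m S; have E0 := Eavg_ge0 S HOne HOch.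
  apply: (@approx_leE _ _ _ (2 * Eavg R n O m S)); first by apply: mulr_ge0.
  move=> d d0 d1.
  apply: (@le_trans _ _ ((1 + 2 * (g + d)) * Eavg R n O m S)%:E); last first.
    by rewrite lee_fin le_eqVlt; apply/orP; left; apply/eqP; ring.
  apply: emp_Q => // Phi OkPhi.
  apply: rob_decomp; apply: (@le_lt_trans _ _ (gamma_max O)).
    by apply: ereal_sup_ubound; exists Phi => //; exact: Okch.
  by rewrite gE lte_fin; lra.
have gmax0 : (0 <= gamma_max O)%E.
  apply: le_trans (_ : robustness O Psi <= _)%E.
    by rewrite req lee_fin.
  by apply: ereal_sup_ubound; exists Psi.
have [gs [gsE Hemp]] : exists gs : R, gamma_star O Psi k = gs%:E /\
   forall m S, (emp_rademacher S (Fset (Ok O Psi k)) <=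
                (gs * Eavg R n O m S)%:E)%E.
  rewrite /gamma_star -/gam -/c.
  case gE : (gamma_max O) gmax0 => [g| |] // _.
  - exists (Num.min (1 + 2 * g) (c ^+ k)); split.
      by rewrite -EFin_min.
    move=> m S; have E0 := Eavg_ge0 S HOne HOch.
    case: (leP (1 + 2 * g) (c ^+ k)) => h.
    + by apply: routeA.
    + by apply: routeB.
  - exists (c ^+ k); split => //.
    rewrite mulry gtr0_sg // mul1e addey // min_r //; exact: leey.
split.
- move=> m S; rewrite gsE (emp_O S HOne HOch) -EFinM; exact: Hemp.
- move=> D m [D0 D1]; rewrite /rademacher gsE.
  apply: (@le_trans _ _ (\sum_(S : {ffun 'I_m -> Bits n * Bits n})
     ((\prod_(i < m) D (S i)) * (gs * Eavg R n O m S))%:E)).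
    apply: lee_sum => S _; rewrite EFinM; apply: lee_wpmul2l => //.
    by rewrite lee_fin; apply: prodr_ge0.
  rewrite sumEFin.
  have -> : (\sum_(S : {ffun 'I_m -> Bits n * Bits n})
      (\prod_(i < m) D (S i))%:E * emp_rademacher S (Fset O) =
      (\sum_(S : {ffun 'I_m -> Bits n * Bits n})
      (\prod_(i < m) D (S i)) * Eavg R n O m S)%:E)%E.
    rewrite -sumEFin; apply: eq_bigr => S _.
    by rewrite (emp_O S HOne HOch) EFinM.
  rewrite -EFinM lee_fin mulr_sumr le_eqVlt; apply/orP; left; apply/eqP.
  by apply: eq_bigr => S _; ring.
Qed.
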